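(* Consider the nonlinear event-triggered setting described in the context, with a smooth class $\mathcal K_\infty$ function $\beta$, $\sigma\in(0,1)$ and $\theta\ge 0$, and execution times generated by the dynamic event generator. Then for all $t\in[0,t_\infty)$, $$\eta(t)+\theta\big(\sigma\alpha(\|x(t)\|)-\gamma(\|e(t)\|)\big)\ge 0\quad\text{and}\quad \eta(t)\ge 0.$$
   Context: Let $f:\mathbb{R}^n\times\mathbb{R}^m\to\mathbb{R}^n$ and a feedback $k:\mathbb{R}^n\to\mathbb{R}^m$ be given. A class $\mathcal K_\infty$ function is a continuous, strictly increasing $\alpha:[0,\infty)\to[0,\infty)$ with $\alpha(0)=0$ and $\alpha(r)\to\infty$ as $r\to\infty$. Assume there is a smooth $V:\mathbb{R}^n\to[0,\infty)$ and class $\mathcal K_\infty$ functions $\underline\alpha,\overline\alpha,\alpha,\gamma$ such that for all $x,e\in\mathbb{R}^n$: $\underline\alpha(\|x\|)\le V(x)\le\overline\alpha(\|x\|)$ and $\nabla V(x)\cdot f(x,k(x+e))\le-\alpha(\|x\|)+\gamma(\|e\|)$ (ISS-Lyapunov function for $\dot x=f(x,k(x+e))$). The plant is $\dot x=f(x,u)$ with sample-and-hold input $u(t)=k(x(t_i))$ for $t\in[t_i,t_{i+1})$, where $(t_i)_{i\in\mathbb I}$ is an increasing sequence of execution times; $e(t)=x(t_i)-x(t)$ for $t\in[t_i,t_{i+1})$, so $\dot x=f(x,k(x+e))$. If there are infinitely many executions, $\mathbb I=\mathbb N$ and $t_\infty=\lim t_i$; if finitely many ($\mathbb I=\{0,\dots,I\}$),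 $t_\infty=t_{I+1}=+\infty$. For a function $g$, $g(t^-)$ denotes the left limit at $t$. Dynamic event generator: with design parameters a smooth class $\mathcal K_\infty$ function $\beta$, $\sigma\in(0,1)$ and $\theta\ge0$, an internal variable $\eta$ satisfies $\dot\eta=-\beta(\eta)+\sigma\alpha(\|x\|)-\gamma(\|e\|)$, $\eta(0)=0$, and execution times are $t_0=0$, $t_{i+1}=\inf\{t>t_i:\ \eta(t)+\theta(\sigma\alpha(\|x(t)\|)-\gamma(\|e(t^-)\|))\le 0\}$. It is assumed that $x(t_i)\neq 0$ for all $i\in\mathbb I$. *)

(* Defs.v *)
From mathcomp Require Import all_boot.
From Stdlib Require Import Reals.
Open Scope R_scope.

Definition vec (n : nat) := 'I_n -> R.

Definition vadd {n} (u v : vec n) : vec n := fun j => u j + v j.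
Definition vsub {n} (u v : vec n) : vec n := fun j => u j - v j.
Definition vzero {n} : vec n := fun _ => 0.

Definition vnorm {n} (v : vec n) : R :=
  sqrt (\big[Rplus/0]_(j < n) (v j * v j)).

Definition vshift {n} (x : vec n) (i : 'I_n) (h : R) : vec n :=
  fun j => if j == i then x j + h else x j.

Definition vdot {n} (u v : vec n) : R := \big[Rplus/0]_(j < n) (u j * v j).

Definition has_partial {n} (F : vec n -> R) (i : 'I_n) (x : vec n) (d : R) :=
  derivable_pt_lim (fun h => F (vshift x i h)) 0 d.

Definition vcontinuous {n} (F : vec n -> R) :=
  forall x eps, 0 < eps -> exists delta, 0 < delta /\
    forall y, vnorm (vsub y x) < delta -> Rabs (F y - F x) < eps.

(* F : R^n -> R is smooth (C^infinity): all iterated partial derivatives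
   exist and are continuous.  D l is the iterated partial derivative along
   the list of directions l. *)
Definition smooth_vec {n} (F : vec n -> R) :=
  exists D : seq 'I_n -> vec n -> R,
    D [::] = F /\
    (forall l, vcontinuous (D l)) /\
    (forall l i x, has_partial (D l) i x (D (i :: l) x)).

Definition smooth_R (b : R -> R) :=
  exists D : nat -> R -> R,
    D O = b /\ forall k t, derivable_pt_lim (D k) t (D (S k) t).

Definition class_Kinf (a : R -> R) :=
  a 0 = 0 /\
  (forall r, 0 <= r -> forall eps, 0 < eps -> exists delta, 0 < delta /\
     forall s, 0 <= s -> Rabs (s - r) < delta -> Rabs (a s - a r) < eps) /\
  (forall r s, 0 <= r -> r < s -> a r < a s) /\
  (forall M, exists r, 0 <= r /\ M < a r).

Definition left_lim {n} (g : R -> vec n) (t : R) (l : vec n) :=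
  forall eps, 0 < eps -> exists delta, 0 < delta /\
    forall s, t - delta < s < t -> vnorm (vsub (g s) l) < eps.

Definition vcont_at {n} (g : R -> vec n) (t : R) :=
  forall eps, 0 < eps -> exists delta, 0 < delta /\
    forall s, 0 <= s -> Rabs (s - t) < delta -> vnorm (vsub (g s) (g t)) < eps.

Definition cont_at (g : R -> R) (t : R) :=
  forall eps, 0 < eps -> exists delta, 0 < delta /\
    forall s, 0 <= s -> Rabs (s - t) < delta -> Rabs (g s - g t) < eps.

Definition is_inf (S : R -> Prop) (a : R) :=
  (forall s, S s -> a <= s) /\
  (forall b, (forall s, S s -> b <= s) -> b <= a).

(* Execution-time bookkeeping.  N = None : infinitely many executions,
   index set = nat.  N = Some I : executions t_0,...,t_I, and t_{I+1} = +oo. *)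
Definition in_I (N : option nat) (i : nat) : Prop :=
  match N with None => True | Some last => (i <= last)%nat end.

Definition has_next (N : option nat) (i : nat) : Prop :=
  match N with None => True | Some last => (i < last)%nat end.

Definition before_next (N : option nat) (tt : nat -> R) (i : nat) (t : R) : Prop :=
  match N with None => t < tt (S i) | Some last => (last <= i)%nat \/ t < tt (S i) end.

(* t < t_oo, where t_oo = lim t_i (infinite case) or +oo (finite case);
   since (t_i) is increasing, t < lim t_i iff t < t_i for some i. *)
Definition before_tinf (N : option nat) (tt : nat -> R) (t : R) : Prop :=
  match N with None => exists i, t < tt i | Some _ => True end.

(* Main.v *)
Require Import Defs.
From mathcomp Require Import all_boot.
From Stdlib Require Import Reals Lra Psatz Lia Classical.
From mathcomp Require Import zify.
Open Scope R_scope.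

Lemma vnorm_ge0 {n} (v : vec n) : 0 <= vnorm v.
Proof. unfold vnorm; apply sqrt_pos. Qed.

Lemma Kinf_ge0 a r : class_Kinf a -> 0 <= r -> 0 <= a r.
Proof.
  intros [H0 [_ [Hinc _]]] Hr.
  destruct (Req_dec r 0) as [->|Hne]; [lra|].
  rewrite <- H0; left; apply Hinc; lra.
Qed.

Lemma vnorm_sub_e {n} (a u v : vec n) :
  vnorm (vsub (vsub a u) (vsub a v)) = vnorm (vsub u v).
Proof.
  unfold vnorm, vsub; f_equal; apply eq_bigr; intros; ring.
Qed.

Lemma vnorm_self {n} (a : vec n) : vnorm (vsub a a) = 0.
Proof.
  unfold vnorm, vsub.
  assert (H : \big[Rplus/0]_(j < n) ((a j - a j) * (a j - a j)) = 0).
  { apply (big_ind (fun x => x = 0)); [reflexivity| |].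
    - intros x y -> ->; ring.
    - intros; ring. }
  rewrite H; apply sqrt_0.
Qed.

Lemma find_interval (tt : nat -> R) t : tt O <= t ->
  forall j, t < tt j -> exists i, (i < j)%nat /\ tt i <= t < tt (S i).
Proof.
  intros H0 j; induction j as [|j IH]; intros Hj; [lra|].
  destruct (Rlt_or_le t (tt j)) as [Hl|Hl].
  - destruct (IH Hl) as [i [Hi1 Hi2]]. exists i; split; [lia|lra].
  - exists j; split; [lia|lra].
Qed.

Lemma beta_bound b : smooth_R b -> b 0 = 0 ->
  exists C d0, 0 < C /\ 0 < d0 /\ forall y, -d0 < y <= 0 -> C * y <= - b y.
Proof.
  intros [D [HD0 HD]] Hb0.
  specialize (HD O 0). rewrite HD0 in HD.
  destruct (HD 1 Rlt_0_1) as [del Hdel].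
  set (d := D 1%nat 0) in *.
  exists (Rabs d + 1), del. split; [pose proof (Rabs_pos d); lra|].
  split; [apply cond_pos|].
  intros y [Hy1 Hy2].
  destruct (Req_dec y 0) as [->|Hne]; [rewrite Hb0; lra|].
  assert (Hlt : Rabs y < del) by (rewrite Rabs_left; lra).
  specialize (Hdel y Hne Hlt).
  rewrite Rplus_0_l Hb0 Rminus_0_r in Hdel.
  apply Rabs_def2 in Hdel. destruct Hdel as [_ Hq].
  set (q := b y / y) in Hq.
  assert (Hby : b y = q * y) by (unfold q; field; exact Hne).
  rewrite Hby.
  pose proof (Rle_abs (-d)) as Ha. rewrite Rabs_Ropp in Ha.
  assert (y < 0) by lra.
  assert (0 < Rabs d + 1 + q) by lra.
  nra.
Qed.
Theorem lemma1
  (n m : nat)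
  (f : vec n -> vec m -> vec n) (k : vec n -> vec m)
  (V : vec n -> R) (alpha_l alpha_u alpha gamma : R -> R)
  (* V is a smooth ISS-Lyapunov function for xdot = f(x, k(x+e)) *)
  (HVsmooth : smooth_vec V)
  (HVpos : forall x, 0 <= V x)
  (Hal : class_Kinf alpha_l) (Hau : class_Kinf alpha_u)
  (Ha : class_Kinf alpha) (Hg : class_Kinf gamma)
  (Hsand : forall x, alpha_l (vnorm x) <= V x <= alpha_u (vnorm x))
  (HISS : forall (x e : vec n) (gradV : vec n),
      (forall i, has_partial V i x (gradV i)) ->
      vdot gradV (f x (k (vadd x e))) <= - alpha (vnorm x) + gamma (vnorm e))
  (* design parameters of the dynamic event generator *)
  (beta : R -> R) (sigma theta : R)
  (Hbsmooth : smooth_R beta) (Hb : class_Kinf beta)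
  (Hsigma : 0 < sigma < 1) (Htheta : 0 <= theta)
  (* execution times t_i, i in the index set given by N *)
  (N : option nat) (tt : nat -> R)
  (* trajectories: state x, error e, internal variable eta *)
  (x e : R -> vec n) (eta : R -> R)
  (Ht0 : tt O = 0)
  (Hincr : forall i, has_next N i -> tt i < tt (S i))
  (* plant with sample-and-hold input u(t) = k(x(t_i)) on [t_i, t_{i+1}) *)
  (Hxcont : forall t, 0 <= t -> before_tinf N tt t -> vcont_at x t)
  (Hxode : forall i t, in_I N i -> tt i < t -> before_next N tt i t ->
      forall j, derivable_pt_lim (fun s => x s j) t (f (x t) (k (x (tt i))) j))
  (He : forall i t, in_I N i -> tt i <= t -> before_next N tt i t ->
      e t = vsub (x (tt i)) (x t))
  (* internal variable of the dynamic event generator *)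
  (Heta0 : eta 0 = 0)
  (Hetacont : forall t, 0 <= t -> before_tinf N tt t -> cont_at eta t)
  (Hetaode : forall i t, in_I N i -> tt i < t -> before_next N tt i t ->
      derivable_pt_lim eta t
        (- beta (eta t) + sigma * alpha (vnorm (x t)) - gamma (vnorm (e t))))
  (* triggering rule: t_{i+1} = inf { t > t_i : eta(t) + theta (sigma alpha(|x(t)|)
     - gamma(|e(t^-)|)) <= 0 }, with inf of the empty set = +oo *)
  (Htrig_next : forall i, has_next N i ->
      is_inf (fun t => tt i < t /\ exists l, left_lim e t l /\
                eta t + theta * (sigma * alpha (vnorm (x t)) - gamma (vnorm l)) <= 0)
             (tt (S i)))
  (Htrig_last : forall i, in_I N i -> ~ has_next N i ->
      forall t, tt i < t -> ~ (exists l, left_lim e t l /\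
                eta t + theta * (sigma * alpha (vnorm (x t)) - gamma (vnorm l)) <= 0))
  (Hxnz : forall i, in_I N i -> x (tt i) <> vzero) :
  forall t, 0 <= t -> before_tinf N tt t ->
    eta t + theta * (sigma * alpha (vnorm (x t)) - gamma (vnorm (e t))) >= 0 /\
    eta t >= 0.
Proof.
  intros t Htnn Htinf.
  assert (BT : forall i s, before_next N tt i s -> before_tinf N tt s).
  { intros i s Hbn. destruct N; simpl in *; [exact I| exists (S i); exact Hbn]. }
  assert (BNm : forall i r s, r <= s -> before_next N tt i s -> before_next N tt i r).
  { intros i r s Hrs Hbn. destruct N; simpl in *;
      [destruct Hbn as [Hbb|Hbb]; [left; exact Hbb|right; lra] | lra]. }
  assert (BN0 : forall i, in_I N i -> before_next N tt i (tt i)).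
  { intros i Hi. destruct N as [last|]; simpl in *.
    - destruct (Nat.lt_ge_cases i last) as [Hl|Hl].
      + right. apply Hincr. simpl. lia.
      + left. lia.
    - apply Hincr. exact I. }
  assert (Hal0 : forall r, 0 <= r -> 0 <= alpha r) by (intros; apply Kinf_ge0; auto).
  assert (HA : forall i s, in_I N i -> 0 <= tt i -> tt i < s -> before_next N tt i s ->
     eta s + theta * (sigma * alpha (vnorm (x s)) - gamma (vnorm (e s))) > 0).
  { intros i s Hi Hti Hlt Hbn.
    apply Rnot_le_gt; intro Hle.
    assert (HLL : left_lim e s (e s)).
    { intros eps Heps.
      destruct (Hxcont s ltac:(lra) (BT i s Hbn) eps Heps) as [d [Hd Hd2]].
      exists (Rmin d (s - tt i)). split; [apply Rmin_glb_lt; lra|].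
      intros r [Hr1 Hr2].
      pose proof (Rmin_l d (s - tt i)); pose proof (Rmin_r d (s - tt i)).
      rewrite (He i r Hi ltac:(lra) (BNm i r s ltac:(lra) Hbn)).
      rewrite (He i s Hi ltac:(lra) Hbn). rewrite vnorm_sub_e.
      apply Hd2; [lra|]. apply Rabs_def1; lra. }
    destruct (classic (has_next N i)) as [Hn|Hnn].
    - destruct (Htrig_next i Hn) as [Hlb _].
      assert (tt (S i) <= s).
      { apply Hlb. split; [lra|]. exists (e s); split; auto. }
      destruct N; simpl in *; [destruct Hbn; [lia|lra]|lra].
    - apply (Htrig_last i Hi Hnn s Hlt). exists (e s); split; auto. }
  assert (HB : forall i, in_I N i -> eta (tt i) >= 0 ->
     eta (tt i) + theta * (sigma * alpha (vnorm (x (tt i))) - gamma (vnorm (e (tt i)))) >= 0).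
  { intros i Hi He0.
    rewrite (He i (tt i) Hi (Rle_refl _) (BN0 i Hi)). rewrite vnorm_self.
    destruct Hg as [Hg0 _]. rewrite Hg0.
    pose proof (Hal0 (vnorm (x (tt i))) (vnorm_ge0 _)).
    assert (0 <= sigma * alpha (vnorm (x (tt i)))) by nra.
    assert (0 <= theta * (sigma * alpha (vnorm (x (tt i))) - 0)) by nra.
    lra. }
  assert (Core : forall i, in_I N i -> 0 <= tt i -> eta (tt i) >= 0 ->
     forall s, tt i <= s -> before_next N tt i s ->
     eta s + theta * (sigma * alpha (vnorm (x s)) - gamma (vnorm (e s))) >= 0 /\ eta s >= 0).
  { intros i Hi Hti He0 s Hs Hbn.
    destruct (Req_dec s (tt i)) as [->|Hne]; [split; auto|].
    assert (Hlt : tt i < s) by lra.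
    pose proof (HA i s Hi Hti Hlt Hbn) as Hps.
    split; [lra|].
    destruct (Rle_lt_dec theta 0) as [Hth|Hth].
    { replace theta with 0 in Hps by lra. rewrite Rmult_0_l in Hps. lra. }
    apply Rnot_lt_ge; intro Hneg.
    set (E := fun r => tt i <= r <= s /\ eta r >= 0).
    destruct (completeness E) as [tau [Hub Hlub]].
    { exists s. intros r [Hr _]. lra. }
    { exists (tt i). split; [lra|auto]. }
    assert (Htau1 : tt i <= tau) by (apply Hub; split; [lra|auto]).
    assert (Htau2 : tau <= s) by (apply Hlub; intros r [Hr _]; lra).
    assert (Hcont : cont_at eta tau)
      by (apply Hetacont; [lra|apply (BT i tau (BNm i tau s Htau2 Hbn))]).
    assert (Hetau : eta tau >= 0).
    { apply Rnot_lt_ge; intro Hc.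
      destruct (Hcont (- eta tau) ltac:(lra)) as [d [Hd Hd2]].
      cut (tau <= tau - d/2); [lra|].
      apply Hlub. intros r [[Hr1 Hr2] Hr3].
      destruct (Rle_lt_dec r (tau - d/2)) as [Hr|Hr]; auto.
      exfalso. assert (r <= tau) by (apply Hub; split; [lra|auto]).
      specialize (Hd2 r ltac:(lra) ltac:(apply Rabs_def1; lra)).
      apply Rabs_def2 in Hd2. lra. }
    assert (Htau3 : tau < s) by (destruct (Req_dec tau s) as [->|]; lra).
    assert (Hafter : forall r, tau < r <= s -> eta r < 0).
    { intros r Hr. apply Rnot_ge_lt; intro Hc.
      assert (r <= tau) by (apply Hub; split; [lra|auto]). lra. }
    destruct (beta_bound beta Hbsmooth (proj1 Hb)) as [C [d0 [HC [Hd0 HCb]]]].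
    destruct (Hcont d0 Hd0) as [d1 [Hd1 Hd1']].
    set (s' := Rmin s (tau + d1/2)).
    assert (Hs'1 : tau < s') by (apply Rmin_glb_lt; lra).
    assert (Hs'2 : s' <= s) by apply Rmin_l.
    assert (Hs'3 : s' <= tau + d1/2) by apply Rmin_r.
    assert (Hes' : eta s' < 0) by (apply Hafter; lra).
    set (M := exp (C * (s' - tau))).
    assert (HM : 0 < M) by apply exp_pos.
    assert (Heps2 : 0 < - eta s' / M) by (apply Rdiv_lt_0_compat; lra).
    destruct (Hcont _ Heps2) as [d2 [Hd2 Hd2']].
    set (a := Rmin (tau + d2/2) ((tau + s')/2)).
    assert (Ha1 : tau < a) by (apply Rmin_glb_lt; lra).
    assert (Ha2 : a <= (tau + s')/2) by apply Rmin_r.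
    assert (Ha3 : a <= tau + d2/2) by apply Rmin_l.
    set (g := fun r => exp (C * (s' - r))).
    set (etad := fun c => - beta (eta c) + sigma * alpha (vnorm (x c)) - gamma (vnorm (e c))).
    set (df := fun c => etad c * g c + eta c * (exp (C * (s' - c)) * - C)).
    assert (Hder : forall c, a <= c <= s' -> derivable_pt_lim (fun r => eta r * g r) c (df c)).
    { intros c Hc.
      assert (H1 : derivable_pt_lim eta c (etad c)).
      { apply (Hetaode i c Hi); [lra|]. apply (BNm i c s); [lra|exact Hbn]. }
      assert (Hf1 : derivable_pt_lim (fun r => C * (s' - r)) c (- C)).
      { intros eps Heps. exists (mkposreal 1 Rlt_0_1). intros h Hh _.
        replace ((C * (s' - (c + h)) - C * (s' - c)) / h - - C) with 0 by (field; auto).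
        rewrite Rabs_R0; lra. }
      assert (H2 : derivable_pt_lim g c (exp (C * (s' - c)) * - C)).
      { exact (derivable_pt_lim_comp (fun r => C * (s' - r)) exp c (- C) _ Hf1
                 (derivable_pt_lim_exp _)). }
      exact (derivable_pt_lim_mult eta g c _ _ H1 H2). }
    destruct (MVT_cor2 (fun r => eta r * g r) df a s' ltac:(lra) Hder) as [c [Hmvt Hc]].
    assert (Hdf : 0 <= df c).
    { assert (Hec : eta c < 0) by (apply Hafter; lra).
      assert (Hec2 : - d0 < eta c).
      { specialize (Hd1' c ltac:(lra) ltac:(apply Rabs_def1; lra)).
        apply Rabs_def2 in Hd1'. lra. }
      pose proof (HCb (eta c) ltac:(lra)) as Hbc.
      pose proof (HA i c Hi Hti ltac:(lra) (BNm i c s ltac:(lra) Hbn)) as Hpc.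
      assert (Hpos : sigma * alpha (vnorm (x c)) - gamma (vnorm (e c)) > 0).
      { apply Rnot_le_gt; intro Hq.
        assert (theta * (sigma * alpha (vnorm (x c)) - gamma (vnorm (e c))) <= 0) by nra.
        lra. }
      assert (Hgc : 0 < g c) by apply exp_pos.
      unfold df, etad. fold (g c).
      replace ((- beta (eta c) + sigma * alpha (vnorm (x c)) - gamma (vnorm (e c))) * g c +
               eta c * (g c * - C))
        with (g c * ((- beta (eta c) - C * eta c) + (sigma * alpha (vnorm (x c)) - gamma (vnorm (e c)))))
        by ring.
      apply Rmult_le_pos; lra. }
    assert (Hge : eta a * g a <= eta s' * g s').
    { assert (0 <= df c * (s' - a)) by (apply Rmult_le_pos; lra). lra. }
    assert (Hgs' : g s' = 1) by (unfold g; rewrite Rminus_diag Rmult_0_r; apply exp_0).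
    assert (Hga : g a < M).
    { unfold g, M. apply exp_increasing. nra. }
    assert (Hea : eta a < 0) by (apply Hafter; lra).
    assert (Hea2 : eta s' / M < eta a).
    { specialize (Hd2' a ltac:(lra) ltac:(apply Rabs_def1; lra)).
      apply Rabs_def2 in Hd2'.
      assert (- (- eta s' / M) = eta s' / M) by (field; lra). lra. }
    assert (eta s' < eta a * M).
    { apply (Rmult_lt_compat_r M) in Hea2; [|lra].
      replace (eta s' / M * M) with (eta s') in Hea2 by (field; lra). lra. }
    assert (eta a * M < eta a * g a) by nra.
    rewrite Hgs' in Hge. lra. }
  assert (Ind : forall i, in_I N i -> 0 <= tt i /\ eta (tt i) >= 0).
  { induction i as [|i IH]; intros Hi.
    - rewrite Ht0 Heta0. lra.
    - assert (Hin : in_I N i /\ has_next N i).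
      { destruct N; simpl in *; split; auto; lia. }
      destruct Hin as [Hin Hhn].
      destruct (IH Hin) as [H1 H2].
      pose proof (Hincr i Hhn) as Hinc.
      split; [lra|].
      assert (Hct : cont_at eta (tt (S i))).
      { apply Hetacont; [lra|].
        destruct N; simpl; [exact I|]. exists (S (S i)). apply Hincr. exact I. }
      apply Rnot_lt_ge; intro Hc.
      destruct (Hct (- eta (tt (S i))) ltac:(lra)) as [d [Hd Hd2]].
      set (r := Rmax (tt i) (tt (S i) - d/2)).
      assert (Hr1 : tt i <= r) by apply Rmax_l.
      assert (Hr2 : tt (S i) - d/2 <= r) by apply Rmax_r.
      assert (Hr3 : r < tt (S i)) by (apply Rmax_lub_lt; lra).
      assert (Hbr : before_next N tt i r) by (destruct N; simpl; [right|]; lra).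
      destruct (Core i Hin H1 H2 r Hr1 Hbr) as [_ Her].
      specialize (Hd2 r ltac:(lra) ltac:(apply Rabs_def1; lra)).
      apply Rabs_def2 in Hd2. lra. }
  assert (Hfind : exists i, in_I N i /\ tt i <= t /\ before_next N tt i t).
  { destruct N as [last|].
    - destruct (Rle_lt_dec (tt last) t) as [Hl|Hl].
      + exists last. split; [simpl; lia|]. split; [lra|]. simpl. left; lia.
      + destruct (find_interval tt t ltac:(lra) last Hl) as [i [Hi1 [Hi2 Hi3]]].
        exists i. split; [simpl; lia|]. split; [lra|]. simpl. right; lra.
    - destruct Htinf as [j Hj].
      destruct (find_interval tt t ltac:(lra) j Hj) as [i [Hi1 [Hi2 Hi3]]].
      exists i. split; [exact I|]. split; [lra|]. simpl; lra. }
  destruct Hfind as [i [Hi [Hti Hbn]]].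
  destruct (Ind i Hi) as [H1 H2].
  exact (Core i Hi H1 H2 t Hti Hbn).
Qed.
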